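(* Let $K\in\{\mathbb R,\mathbb C,\mathbb H\}$ and let $(E,d)$ be a metric vector space over $K$ such that $d$ is $C_0$-translation invariant and $(C_1,C_2,C_3)$-lipschitz multiplicative. Let $d_0(x,y)=\int_{\mathbb U}d(ux,uy)\,d\mu(u)$ and $\delta_0(x,y)=\lim_{n\to\infty}\frac1n d_0(nx,ny)$. Then every set that is closed (resp. open) for $\delta_0$ is closed (resp. open) for $d$; that is, the topology generated by $d$ is finer than the topology generated by $\delta_0$.
   Context: A metric vector space is a topological vector space over $K$ whose topology is generated by the metric $d$. $\mathbb U=\{u\in K:|u|=1\}$, $\mu$ the right-invariant Haar probability measure on $\mathbb U$. $d$ is $C_0$-translation invariant if $d(x+z,y+z)\le d(x,y)+C_0$ for all $x,y,z$. $(C_1,C_2,C_3)$-lipschitz multiplicative ($C_1\ge1$, $C_2,C_3\ge0$) means $C_1^{-1}|\lambda|d(x,y)-C_2|\lambda|-C_3\le d(\lambda x,\lambda y)\le C_1|\lambda|d(x,y)+C_2|\lambda|+C_3$ for all $\lambda\in K$, $x,y\in E$. (Under these hypotheses the limit defining $\delta_0$ exists.) *)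

(* Defs.v *)
From HB Require Import structures.
From mathcomp Require Import all_boot all_order all_algebra.
From mathcomp Require Import all_classical all_reals all_analysis.

Set Implicit Arguments.
Unset Strict Implicit.
Unset Printing Implicit Defensive.

Import Order.TTheory GRing.Theory Num.Theory.
Import numFieldNormedType.Exports.
Local Open Scope classical_set_scope.
Local Open Scope ring_scope.

Inductive Kkind := KR | KC | KH.

Record quat (R : Type) := Quat { q0 : R; q1 : R; q2 : R; q3 : R }.

Section Scalars.
Variable R : realType.

Definition Kcar (k : Kkind) : Type :=
  match k with KR => R | KC => (R * R)%type | KH => quat R end.

(* complex numbers a + b i as pairs (a, b) *)
Definition cadd (a b : R * R) : R * R := (a.1 + b.1, a.2 + b.2).
Definition csub (a b : R * R) : R * R := (a.1 - b.1, a.2 - b.2).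
Definition cmul (a b : R * R) : R * R :=
  (a.1 * b.1 - a.2 * b.2, a.1 * b.2 + a.2 * b.1).
Definition cabs (a : R * R) : R := Num.sqrt (a.1 ^+ 2 + a.2 ^+ 2).

(* quaternions a0 + a1 i + a2 j + a3 k, Hamilton product *)
Definition qadd (a b : quat R) : quat R :=
  Quat (q0 a + q0 b) (q1 a + q1 b) (q2 a + q2 b) (q3 a + q3 b).
Definition qsub (a b : quat R) : quat R :=
  Quat (q0 a - q0 b) (q1 a - q1 b) (q2 a - q2 b) (q3 a - q3 b).
Definition qmul (a b : quat R) : quat R :=
  Quat (q0 a * q0 b - q1 a * q1 b - q2 a * q2 b - q3 a * q3 b)
       (q0 a * q1 b + q1 a * q0 b + q2 a * q3 b - q3 a * q2 b)
       (q0 a * q2 b - q1 a * q3 b + q2 a * q0 b + q3 a * q1 b)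
       (q0 a * q3 b + q1 a * q2 b - q2 a * q1 b + q3 a * q0 b).
Definition qabs (a : quat R) : R :=
  Num.sqrt (q0 a ^+ 2 + q1 a ^+ 2 + q2 a ^+ 2 + q3 a ^+ 2).

Definition Kadd (k : Kkind) : Kcar k -> Kcar k -> Kcar k :=
  match k return Kcar k -> Kcar k -> Kcar k with
  | KR => fun a b : R => a + b | KC => cadd | KH => qadd end.
Definition Ksub (k : Kkind) : Kcar k -> Kcar k -> Kcar k :=
  match k return Kcar k -> Kcar k -> Kcar k with
  | KR => fun a b : R => a - b | KC => csub | KH => qsub end.
Definition Kmul (k : Kkind) : Kcar k -> Kcar k -> Kcar k :=
  match k return Kcar k -> Kcar k -> Kcar k with
  | KR => fun a b : R => a * b | KC => cmul | KH => qmul end.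
Definition Kone (k : Kkind) : Kcar k :=
  match k return Kcar k with
  | KR => (1 : R) | KC => ((1 : R), (0 : R)) | KH => Quat 1 0 0 0 end.
Definition Kabs (k : Kkind) : Kcar k -> R :=
  match k return Kcar k -> R with
  | KR => fun a : R => `|a| | KC => cabs | KH => qabs end.

(** Integral against the (right-invariant) Haar probability measure mu on
    U = {u in K : |u| = 1}, written through explicit parametrisations:
    - K = R : U = {1, -1}, mu uniform;
    - K = C : U = unit circle, u = exp(2 pi i t), t uniform on [0,1];
    - K = H : U = S^3, u = (sqrt r cos 2pi s, sqrt r sin 2pi s,
              sqrt(1-r) cos 2pi t, sqrt(1-r) sin 2pi t), (r,s,t) uniform on
              [0,1]^3 (Hopf coordinates with r = sin^2 eta); the image measure
              is the normalised surface measure on S^3. *)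
Definition lebR := (@lebesgue_measure R).
Definition I01 : set R := [set t | 0 <= t <= 1].

Definition Khaar (k : Kkind) : (Kcar k -> R) -> \bar R :=
  match k return (Kcar k -> R) -> \bar R with
  | KR => fun f => (((f 1 + f (-1)) / 2)%:E)%E
  | KC => fun f =>
      (\int[lebR]_(t in I01) (f (cos (2 * pi * t), sin (2 * pi * t)))%:E)%E
  | KH => fun f =>
      (\int[lebR]_(r in I01) \int[lebR]_(s in I01) \int[lebR]_(t in I01)
        (f (Quat (Num.sqrt r * cos (2 * pi * s)) (Num.sqrt r * sin (2 * pi * s))
                 (Num.sqrt (1 - r) * cos (2 * pi * t))
                 (Num.sqrt (1 - r) * sin (2 * pi * t))))%:E)%E
  end.

End Scalars.

Section MVS.
Variables (R : realType) (k : Kkind) (E : zmodType).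
Variables (sc : Kcar R k -> E -> E) (d : E -> E -> R).

Definition is_metric :=
  [/\ forall x y, 0 <= d x y,
      forall x y, d x y = 0 <-> x = y,
      forall x y, d x y = d y x &
      forall x y z, d x z <= d x y + d y z].

Definition is_left_Kmodule :=
  [/\ forall a b x, sc (Kadd a b) x = sc a x + sc b x,
      forall a x y, sc a (x + y) = sc a x + sc a y,
      forall a b x, sc (Kmul a b) x = sc a (sc b x) &
      forall x, sc (Kone R k) x = x].

Definition is_tvs_for_metric :=
  (forall x y e, 0 < e -> exists2 del, 0 < del &
     forall x' y', d x' x < del -> d y' y < del -> d (x' + y') (x + y) < e) /\
  (forall a x e, 0 < e -> exists2 del, 0 < del &
     forall a' x', Kabs (Ksub a' a) < del -> d x' x < del ->
       d (sc a' x') (sc a x) < e).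

Definition metric_vector_space := [/\ is_metric, is_left_Kmodule & is_tvs_for_metric].

Definition translation_invariant (C0 : R) :=
  forall x y z, d (x + z) (y + z) <= d x y + C0.

Definition lipschitz_multiplicative (C1 C2 C3 : R) :=
  [/\ 1 <= C1, 0 <= C2, 0 <= C3 &
   forall (l : Kcar R k) x y,
     C1^-1 * Kabs l * d x y - C2 * Kabs l - C3 <= d (sc l x) (sc l y) /\
     d (sc l x) (sc l y) <= C1 * Kabs l * d x y + C2 * Kabs l + C3].

Definition d0 (x y : E) : R := fine (Khaar (fun u => d (sc u x) (sc u y))).

Definition delta0 (x y : E) : R :=
  limn (fun n : nat => d0 (x *+ n) (y *+ n) / n%:R).

End MVS.

Definition mopen (T : Type) (R : realType) (m : T -> T -> R) (A : set T) :=
  forall x, A x -> exists2 e : R, 0 < e & forall y, m x y < e -> A y.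
Definition mclosed (T : Type) (R : realType) (m : T -> T -> R) (A : set T) :=
  mopen m (~` A).

(* Main.v *)
Require Import Defs.
From HB Require Import structures.
From mathcomp Require Import all_boot all_order all_algebra.
From mathcomp Require Import all_classical all_reals all_analysis.
From mathcomp Require Import measurable_realfun.
From mathcomp Require Import ring lra.
Import Order.TTheory GRing.Theory Num.Theory.
Import numFieldNormedType.Exports.
Local Open Scope classical_set_scope.
Local Open Scope ring_scope.

Set Implicit Arguments.
Unset Strict Implicit.
Unset Printing Implicit Defensive.

Lemma I01E (R : realType) : @I01 R = `[0%R, 1%R]%classic.
Proof. by apply/seteqP; split => t /=; rewrite in_itv. Qed.

Lemma mI01 (R : realType) : @measurable _ (measurableTypeR R) (@I01 R).
Proof. by rewrite I01E; exact: measurable_itv. Qed.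

Lemma lebI01 (R : realType) : @lebR R (@I01 R) = 1%E.
Proof. by rewrite I01E /lebR lebesgue_measure_itv /= lte01 oppr0 adde0. Qed.

Lemma cont_int (R : realType) (f : R -> R) (M : R) :
  continuous f -> (forall t, 0 <= f t <= M) ->
  (@lebR R).-integrable (@I01 R) (EFin \o f).
Proof.
move=> cf fM; apply: measurable_bounded_integrable.
- exact: mI01.
- by change (@lebR R (@I01 R) < +oo)%E; rewrite lebI01 ltry.
- apply: measurable_funS (continuous_measurable_fun cf) => //.
- exists M; split; first by rewrite num_real.
  move=> y My x _ /=; have /andP[f0 f1] := fM x.
  by rewrite ger0_norm // (le_trans f1) // ltW.
Qed.

Lemma Rint_bound (R : realType) (f : R -> R) (M : R) :
  continuous f -> (forall t, 0 <= f t <= M) ->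
  0 <= Rintegral (@lebR R) (@I01 R) f <= M.
Proof.
move=> cf fM; apply/andP; split.
  by apply: Rintegral_ge0 => t _; have /andP[] := fM t.
have -> : M = Rintegral (@lebR R) (@I01 R) (fun=> M).
  rewrite Rintegral_cst; last exact: mI01.
  have -> : fine (@lebR R (@I01 R)) = 1 by exact: (congr1 fine (lebI01 R)).
  by rewrite mulr1.
apply: le_Rintegral; first exact: mI01.
- exact: cont_int fM.
- apply: (@cont_int _ _ M); first exact: cst_continuous.
  by move=> t; have /andP[f0 f1] := fM t; rewrite lexx (le_trans f0 f1).
- by move=> t _; have /andP[] := fM t.
Qed.

Lemma cst_int (R : realType) (c : R) :
  (@lebR R).-integrable (@I01 R) (EFin \o (fun=> c)).
Proof.
apply: measurable_bounded_integrable; first exact: mI01.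
- by change (@lebR R (@I01 R) < +oo)%E; rewrite lebI01 ltry.
- exact: measurable_cst.
- exact: bounded_cst.
Qed.

Lemma Rint_cst (R : realType) (c : R) : Rintegral (@lebR R) (@I01 R) (fun=> c) = c.
Proof.
rewrite Rintegral_cst; last exact: mI01.
have -> : fine (@lebR R (@I01 R)) = 1 by exact: (congr1 fine (lebI01 R)).
by rewrite mulr1.
Qed.

Lemma Rint_sub (R : realType) (f g h : R -> R) (Mf Mg Mh c : R) :
  0 <= c ->
  continuous f -> (forall t, 0 <= f t <= Mf) ->
  continuous g -> (forall t, 0 <= g t <= Mg) ->
  continuous h -> (forall t, 0 <= h t <= Mh) ->
  (forall t, f t <= g t + h t + c) ->
  Rintegral (@lebR R) (@I01 R) f <=
  Rintegral (@lebR R) (@I01 R) g + Rintegral (@lebR R) (@I01 R) h + c.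
Proof.
move=> c0 cf fM cg gM ch hM fgh.
have ig := cont_int cg gM; have ih := cont_int ch hM.
have cgh : continuous (fun t => g t + h t).
  by move=> x; apply: cvgD; [exact: cg | exact: ch].
have ghM : forall t, 0 <= g t + h t <= Mg + Mh.
  move=> t; have /andP[g0 g1] := gM t; have /andP[h0 h1] := hM t.
  by rewrite addr_ge0 //= lerD.
have igh := cont_int cgh ghM.
have cghc : continuous (fun t => g t + h t + c).
  by move=> x; apply: cvgD; [exact: cgh | exact: cvg_cst].
have ghcM : forall t, 0 <= g t + h t + c <= Mg + Mh + c.
  move=> t; have /andP[g0 g1] := ghM t.
  by rewrite addr_ge0 //= lerD.
apply: (@le_trans _ _ (Rintegral (@lebR R) (@I01 R) (fun t => g t + h t + c))).
  apply: le_Rintegral.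
  - exact: mI01.
  - exact: cont_int cf fM.
  - exact: cont_int cghc ghcM.
  - by move=> t _; exact: fgh.
rewrite RintegralD //; [|exact: mI01|exact: cst_int].
by rewrite RintegralD //; [rewrite Rint_cst|exact: mI01].
Qed.

Lemma Rint_EFin (R : realType) (f : R -> R) (M : R) :
  continuous f -> (forall t, 0 <= f t <= M) ->
  (\int[@lebR R]_(t in @I01 R) (f t)%:E)%E = (Rintegral (@lebR R) (@I01 R) f)%:E.
Proof.
move=> cf fM; rewrite /Rintegral fineK //.
apply: integrable_fin_num; [exact: mI01 | exact: cont_int cf fM].
Qed.

Lemma param_cont (R : realType) (h : R -> R -> R) (M : R) :
  (forall p t, 0 <= h p t <= M) ->
  (forall p, continuous (h p)) ->
  (forall t, continuous (fun p => h p t)) ->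
  continuous (fun p => Rintegral (@lebR R) (@I01 R) (h p)).
Proof.
move=> hM ch cht p; apply: (proj2 (@cvg_nbhsP R R^o _ p _)) => u up.
apply: (@fine_cvg _ _ _ _ (fun n => \int[@lebR R]_(t in @I01 R) (h (u n) t)%:E)%E).
rewrite -(Rint_EFin (ch p) (hM p)).
apply: (@dominated_cvg _ _ _ _ _ _ _ _ (fun=> M%:E)).
- exact: mI01.
- move=> n; apply/measurable_EFinP.
  exact: measurable_funS (continuous_measurable_fun (ch (u n))).
- move=> t _; apply: cvg_EFin; first by near=> n.
  have := proj1 (@cvg_nbhsP R R^o _ p _) (cht t p) u up.
  done.
- by [].
- exact: cst_int.
- move=> n t _; have /andP[h0 h1] := hM (u n) t.
  by rewrite lee_fin ger0_norm.
Unshelve. all: end_near.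
Qed.
Lemma sub_iter (R : realType) (b : nat -> R) m q r :
  (forall n m, b (n + m)%N <= b n + b m) ->
  b (q * m + r)%N <= q%:R * b m + b r.
Proof.
move=> bs; elim: q => [|q IH]; first by rewrite mul0n add0n mul0r add0r.
rewrite mulSn -addnA (le_trans (bs _ _)) // -natr1 mulrDl mul1r.
move: IH; set X := b (q * m + r)%N; set Y := b m; set Z := b r.
move=> IH; lra.
Qed.

Lemma le_sum_ord (R : realType) (b : nat -> R) m r :
  (forall n, 0 <= b n) -> (r < m)%N -> b r <= \sum_(i < m) b i.
Proof.
move=> b0 rm; rewrite (bigD1 (Ordinal rm)) //= lerDl.
by apply: sumr_ge0 => i _.
Qed.

Lemma fekete (R : realType) (a : nat -> R) (c : R) :
  0 <= c -> (forall n, 0 <= a n) ->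
  (forall n m, a (n + m)%N <= a n + a m + c) ->
  exists L, (a n / n%:R @[n --> \oo] --> L) /\
            (forall m, (0 < m)%N -> L <= (a m + c) / m%:R).
Proof.
move=> c0 a0 asub.
pose b n := a n + c.
have b0 n : 0 <= b n by rewrite addr_ge0.
have bsub n m : b (n + m)%N <= b n + b m.
  rewrite /b; have := asub n m; lra.
pose S := [set x | exists2 m, (0 < m)%N & x = b m / m%:R].
have lbS : has_lbound S.
  by exists 0 => x [m _ ->]; rewrite divr_ge0.
have neS : S !=set0 by exists (b 1%N / 1%:R); exists 1%N.
have infS := ge_inf lbS.
exists (inf S); split; last first.
  by move=> m m0; apply: infS; exists m.
apply/cvgrPdist_lt => e e0.
have e30 : 0 < e / 3 by rewrite divr_gt0.
have [x [m m0 ->] bmL] := inf_adherent e30 (conj neS lbS).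
pose B := \sum_(i < m) b i.
have B0 : 0 <= B by apply: sumr_ge0.
pose N := (Num.trunc (3 * (B + c) / e)).+1.
exists N => // n /= Nn.
have n0 : (0 < n)%N by apply: leq_trans Nn.
have nR0 : 0 < n%:R :> R by rewrite ltr0n.
have hN : 3 * (B + c) / e < n%:R.
  apply: lt_le_trans (truncnS_gt _) _; rewrite ler_nat; exact: Nn.
have e0' : 0 < e by [].
have hN' : 3 * (B + c) < n%:R * e by rewrite -ltr_pdivrMr.
have hB : B / n%:R < e / 3.
  by rewrite ltr_pdivrMr //; lra.
have hc : c / n%:R < e / 3.
  by rewrite ltr_pdivrMr //; lra.
have mR0 : 0 < m%:R :> R by rewrite ltr0n.
have L1 : inf S <= a n / n%:R + c / n%:R.
  by rewrite -mulrDl; apply: infS; exists n.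
set q := (n %/ m)%N; set r := (n %% m)%N.
have nqr : n = (q * m + r)%N by rewrite /q /r -divn_eq.
have h2 : b n <= q%:R * b m + b r.
  by rewrite {1}nqr; apply: sub_iter.
have h4 : b r <= B by apply: le_sum_ord => //; rewrite /r ltn_pmod.
have h3 : q%:R * b m / n%:R <= b m / m%:R.
  rewrite ler_pdivrMr // mulrAC -mulrA [X in _ <= X]mulrC.
  apply: ler_wpM2r => //.
  by rewrite ler_pdivlMr // -natrM ler_nat /q leq_trunc_div.
have h5 : a n / n%:R <= b n / n%:R.
  by rewrite ler_pM2r ?invr_gt0 // /b lerDl.
have h6 : b n / n%:R <= q%:R * b m / n%:R + B / n%:R.
  by rewrite -mulrDl ler_pM2r ?invr_gt0 //; lra.
have hc0 : 0 <= c / n%:R by rewrite divr_ge0 // ltW.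
rewrite ltr_norml; apply/andP; split; lra.
Qed.
Definition Kcont (R : realType) (k : Kkind) (f : Kcar R k -> R) :=
  forall u0 e, 0 < e -> exists2 del, 0 < del &
    forall u, Kabs (Ksub u u0) < del -> `|f u - f u0| < e.

Lemma near0 (R : realType) (phi : R -> R) v0 :
  {for v0, continuous phi} -> phi v0 = 0 ->
  forall e, 0 < e -> \forall v \near v0, phi v < e.
Proof.
move=> cphi p0 e e0; move/cvgrPdist_lt: cphi => /(_ e e0).
apply: filterS => v; rewrite p0 sub0r normrN => h.
exact: le_lt_trans (ler_norm _) h.
Qed.

Lemma param_cont_f (R : realType) (k : Kkind) (f : Kcar R k -> R)
  (psi : R -> Kcar R k) :
  Kcont f ->
  (forall v0 e, 0 < e -> \forall v \near v0, Kabs (Ksub (psi v) (psi v0)) < e) ->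
  continuous (fun v => f (psi v)).
Proof.
move=> cf cpsi v0; apply/cvgrPdist_lt => e e0.
have [del del0 H] := cf (psi v0) e e0.
apply: filterS (cpsi v0 del del0) => v /H.
by rewrite distrC.
Qed.

Lemma cont_sq (R : realType) (g : R -> R) v0 :
  continuous g ->
  (fun v => (g v - g v0) ^+ 2) @ v0 --> (g v0 - g v0) ^+ 2.
Proof.
move=> cg; rewrite expr2.
under eq_fun do rewrite expr2.
by apply: cvgM; apply: cvgB; [exact: cg | exact: cvg_cst | exact: cg | exact: cvg_cst].
Qed.

Lemma cabs_near (R : realType) (g1 g2 : R -> R) :
  continuous g1 -> continuous g2 ->
  forall v0 e, 0 < e -> \forall v \near v0,
    cabs (csub (g1 v, g2 v) (g1 v0, g2 v0)) < e.
Proof.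
move=> c1 c2 v0; apply: near0; last by rewrite /cabs /csub /= !subrr expr0n /= addr0 sqrtr0.
rewrite /cabs /csub /=.
apply: continuous_comp; last exact: sqrt_continuous.
by apply: cvgD; apply: cont_sq.
Qed.

Lemma qabs_near (R : realType) (g1 g2 g3 g4 : R -> R) :
  continuous g1 -> continuous g2 -> continuous g3 -> continuous g4 ->
  forall v0 e, 0 < e -> \forall v \near v0,
    qabs (qsub (Quat (g1 v) (g2 v) (g3 v) (g4 v)) (Quat (g1 v0) (g2 v0) (g3 v0) (g4 v0))) < e.
Proof.
move=> c1 c2 c3 c4 v0; apply: near0; last by rewrite /qabs /qsub /= !subrr expr0n /= !addr0 sqrtr0.
rewrite /qabs /qsub /=.
apply: continuous_comp; last exact: sqrt_continuous.
by apply: cvgD; [apply: cvgD; [apply: cvgD|]|]; apply: cont_sq.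
Qed.

Definition pC (R : realType) (t : R) : R * R := (cos (2 * pi * t), sin (2 * pi * t)).
Definition Qp (R : realType) (r s t : R) : quat R :=
  Quat (Num.sqrt r * cos (2 * pi * s)) (Num.sqrt r * sin (2 * pi * s))
       (Num.sqrt (1 - r) * cos (2 * pi * t)) (Num.sqrt (1 - r) * sin (2 * pi * t)).
Definition clamp (R : realType) (r : R) := (`|r| - `|r - 1| + 1) / 2.

Lemma cont_lin (R : realType) (b : R -> R) : continuous b ->
  continuous (fun v => 2 * pi * b v).
Proof. by move=> cb v; apply: cvgM; [exact: cvg_cst | exact: cb]. Qed.

Lemma cont_cos (R : realType) (b : R -> R) : continuous b ->
  continuous (fun v => cos (2 * pi * b v)).
Proof.
move=> cb v; apply: continuous_comp; first exact: cont_lin.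
exact: continuous_cos.
Qed.

Lemma cont_sin (R : realType) (b : R -> R) : continuous b ->
  continuous (fun v => sin (2 * pi * b v)).
Proof.
move=> cb v; apply: continuous_comp; first exact: cont_lin.
exact: continuous_sin.
Qed.

Lemma cont_sqrt (R : realType) (a : R -> R) : continuous a ->
  continuous (fun v => Num.sqrt (a v)).
Proof. by move=> ca v; apply: continuous_comp; [exact: ca | exact: sqrt_continuous]. Qed.

Lemma cont_sqrt1 (R : realType) (a : R -> R) : continuous a ->
  continuous (fun v => Num.sqrt (1 - a v)).
Proof.
move=> ca v; apply: continuous_comp; last exact: sqrt_continuous.
by apply: cvgB; [exact: cvg_cst | exact: ca].
Qed.

Lemma cont_mulf (R : realType) (a b : R -> R) : continuous a -> continuous b ->
  continuous (fun v => a v * b v).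
Proof. by move=> ca cb v; apply: cvgM; [exact: ca | exact: cb]. Qed.

Lemma pC_near (R : realType) (b : R -> R) : continuous b ->
  forall v0 e, 0 < e -> \forall v \near v0,
    cabs (csub (pC (b v)) (pC (b v0))) < e.
Proof.
move=> cb; exact: (cabs_near (g1 := fun v => cos (2 * pi * b v))
                             (g2 := fun v => sin (2 * pi * b v)) (cont_cos cb) (cont_sin cb)).
Qed.

Lemma Qp_near (R : realType) (a b c : R -> R) :
  continuous a -> continuous b -> continuous c ->
  forall v0 e, 0 < e -> \forall v \near v0,
    qabs (qsub (Qp (a v) (b v) (c v)) (Qp (a v0) (b v0) (c v0))) < e.
Proof.
move=> ca cb cc.
exact: (qabs_near (g1 := fun v => Num.sqrt (a v) * cos (2 * pi * b v))
  (g2 := fun v => Num.sqrt (a v) * sin (2 * pi * b v))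
  (g3 := fun v => Num.sqrt (1 - a v) * cos (2 * pi * c v))
  (g4 := fun v => Num.sqrt (1 - a v) * sin (2 * pi * c v))
  (cont_mulf (cont_sqrt ca) (cont_cos cb)) (cont_mulf (cont_sqrt ca) (cont_sin cb))
  (cont_mulf (cont_sqrt1 ca) (cont_cos cc)) (cont_mulf (cont_sqrt1 ca) (cont_sin cc))).
Qed.

Lemma pC_abs (R : realType) (t : R) : cabs (pC t) = 1.
Proof. by rewrite /cabs /pC /= cos2Dsin2 sqrtr1. Qed.

Lemma Qp_abs (R : realType) (r s t : R) : 0 <= r <= 1 -> qabs (Qp r s t) = 1.
Proof.
move=> /andP[r0 r1]; rewrite /qabs /Qp /= !exprMn !sqr_sqrtr //; last by rewrite subr_ge0.
have h1 := cos2Dsin2 (2 * pi * s); have h2 := cos2Dsin2 (2 * pi * t).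
move: h1 h2; set c1 := cos _ ^+ 2; set s1 := sin _ ^+ 2; set c2 := cos _ ^+ 2;
  set s2 := sin _ ^+ 2 => h1 h2.
have -> : r * c1 + r * s1 + (1 - r) * c2 + (1 - r) * s2 =
          r * (c1 + s1) + (1 - r) * (c2 + s2) by ring.
by rewrite h1 h2 !mulr1 addrC subrK sqrtr1.
Qed.

Lemma clamp_cont (R : realType) : continuous (@clamp R).
Proof.
move=> v; rewrite /clamp; apply: cvgM; last exact: cvg_cst.
apply: cvgD; last exact: cvg_cst.
apply: cvgB; apply: cvg_norm; first exact: cvg_id.
by apply: cvgB; [exact: cvg_id | exact: cvg_cst].
Qed.

Lemma clamp01 (R : realType) (r : R) : 0 <= clamp r <= 1.
Proof.
rewrite /clamp; case: (lerP 0 r) => r0.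
- rewrite (ger0_norm r0); case: (lerP 1 r) => r1; apply/andP; split; lra.
- rewrite (ltr0_norm r0); case: (lerP 1 r) => r1; apply/andP; split; lra.
Qed.

Lemma clampE (R : realType) (r : R) : 0 <= r <= 1 -> clamp r = r.
Proof.
move=> /andP[r0 r1].
rewrite /clamp (ger0_norm r0); case: (lerP 1 r) => r1'; lra.
Qed.

Lemma cont_cst (R : realType) (c : R) : continuous (fun _ : R => c).
Proof. by move=> v; exact: cvg_cst. Qed.

Lemma cont_id (R : realType) : continuous (fun v : R => v).
Proof. by move=> v; exact: cvg_id. Qed.

Unset Implicit Arguments.
Section KH.
Variable R : realType.
Implicit Types f : quat R -> R.

Definition g3 f (r s t : R) := f (Qp (clamp r) s t).
Definition G3 f (r s : R) := Rintegral (@lebR R) (@I01 R) (g3 f r s).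
Definition H3 f (r : R) := Rintegral (@lebR R) (@I01 R) (G3 f r).

Lemma g3_bd f M : (forall u, qabs u = 1 -> 0 <= f u <= M) ->
  forall r s t, 0 <= g3 f r s t <= M.
Proof. by move=> fM r s t; apply: fM; apply: Qp_abs; exact: clamp01. Qed.

Lemma g3_ct f : @Kcont R KH f -> forall r s, continuous (g3 f r s).
Proof.
move=> cf r s; apply: (param_cont_f (k := KH) (psi := fun t => Qp (clamp r) s t)) => //.
by move=> v0 e e0; apply: filterS (Qp_near (@cont_cst R (clamp r)) (@cont_cst R s) (@cont_id R) v0 e0).
Qed.

Lemma g3_cs f : @Kcont R KH f -> forall r t, continuous (fun s => g3 f r s t).
Proof.
move=> cf r t; apply: (param_cont_f (k := KH) (psi := fun s => Qp (clamp r) s t)) => //.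
by move=> v0 e e0; apply: filterS (Qp_near (@cont_cst R (clamp r)) (@cont_id R) (@cont_cst R t) v0 e0).
Qed.

Lemma g3_cr f : @Kcont R KH f -> forall s t, continuous (fun r => g3 f r s t).
Proof.
move=> cf s t; apply: (param_cont_f (k := KH) (psi := fun r => Qp (clamp r) s t)) => //.
by move=> v0 e e0; apply: filterS (Qp_near (@clamp_cont R) (@cont_cst R s) (@cont_cst R t) v0 e0).
Qed.

Lemma G3_bd f M : (forall u, qabs u = 1 -> 0 <= f u <= M) -> @Kcont R KH f ->
  forall r s, 0 <= G3 f r s <= M.
Proof. by move=> fM cf r s; apply: Rint_bound; [exact: g3_ct | exact: (g3_bd _ _ fM)]. Qed.

Lemma G3_cs f M : (forall u, qabs u = 1 -> 0 <= f u <= M) -> @Kcont R KH f ->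
  forall r, continuous (G3 f r).
Proof.
move=> fM cf r; apply: (@param_cont R (fun s t => g3 f r s t) M).
- by move=> p t; apply: (g3_bd _ _ fM).
- by move=> p; apply: (g3_ct _ cf).
- by move=> t; apply: (g3_cs _ cf).
Qed.

Lemma G3_cr f M : (forall u, qabs u = 1 -> 0 <= f u <= M) -> @Kcont R KH f ->
  forall s, continuous (fun r => G3 f r s).
Proof.
move=> fM cf s; apply: (@param_cont R (fun r t => g3 f r s t) M).
- by move=> p t; apply: (g3_bd _ _ fM).
- by move=> p; apply: (g3_ct _ cf).
- by move=> t; apply: (g3_cr _ cf).
Qed.

Lemma H3_bd f M : (forall u, qabs u = 1 -> 0 <= f u <= M) -> @Kcont R KH f ->
  forall r, 0 <= H3 f r <= M.
Proof. by move=> fM cf r; apply: Rint_bound; [exact: (G3_cs _ _ fM cf r) | exact: (G3_bd _ _ fM cf r)]. Qed.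

Lemma H3_c f M : (forall u, qabs u = 1 -> 0 <= f u <= M) -> @Kcont R KH f ->
  continuous (H3 f).
Proof.
move=> fM cf; apply: (@param_cont R (G3 f) M).
- by move=> p t; apply: (G3_bd _ _ fM cf).
- by move=> p; exact: (G3_cs _ _ fM cf p).
- by move=> t; exact: (G3_cr _ _ fM cf t).
Qed.

Lemma KH_eq f M : (forall u, qabs u = 1 -> 0 <= f u <= M) -> @Kcont R KH f ->
  fine (@Khaar R KH f) = Rintegral (@lebR R) (@I01 R) (H3 f).
Proof.
move=> fM cf; rewrite /Khaar /Rintegral; congr fine.
apply: eq_integral => r; rewrite inE => r01.
rewrite /H3 -(Rint_EFin (G3_cs _ _ fM cf r) (G3_bd _ _ fM cf r)).
apply: eq_integral => s _.
rewrite /G3 -(Rint_EFin (g3_ct _ cf r s) (g3_bd _ _ fM r s)).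
apply: eq_integral => t _.
by rewrite /g3 clampE.
Qed.

End KH.

Lemma pC_cont (R : realType) (f : R * R -> R) : @Kcont R KC f ->
  continuous (fun t => f (pC t)).
Proof.
move=> cf; apply: (param_cont_f (k := KC) (psi := @pC R)) => //.
by move=> v0 e e0; apply: filterS (pC_near (@cont_id R) v0 e0).
Qed.

Lemma Khaar_bd (R : realType) (k : Kkind) (f : Kcar R k -> R) (M : R) :
  Kcont f -> (forall u, Kabs u = 1 -> 0 <= f u <= M) ->
  0 <= fine (Khaar f) <= M.
Proof.
case: k f => f cf fM.
- rewrite /=; have := fM 1 (normr1 _); have := fM (-1) (normrN1 _).
  move=> /andP[h1 h2] /andP[h3 h4]; apply/andP; split; lra.
- rewrite /=; change (0 <= Rintegral (@lebR R) (@I01 R) (fun t => f (pC t)) <= M).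
  apply: (Rint_bound (pC_cont _ _ cf)) => t.
  by apply: fM; exact: pC_abs.
- rewrite (KH_eq _ _ _ fM cf).
  exact: (Rint_bound (H3_c _ _ _ fM cf) (H3_bd _ _ _ fM cf)).
Qed.

Lemma Khaar_sub (R : realType) (k : Kkind) (f g h : Kcar R k -> R) (Mf Mg Mh c : R) :
  0 <= c ->
  Kcont f -> (forall u, Kabs u = 1 -> 0 <= f u <= Mf) ->
  Kcont g -> (forall u, Kabs u = 1 -> 0 <= g u <= Mg) ->
  Kcont h -> (forall u, Kabs u = 1 -> 0 <= h u <= Mh) ->
  (forall u, Kabs u = 1 -> f u <= g u + h u + c) ->
  fine (Khaar f) <= fine (Khaar g) + fine (Khaar h) + c.
Proof.
case: k f g h => f g h c0 cf fM cg gM ch hM fgh.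
- rewrite /=; have := fgh 1 (normr1 _); have := fgh (-1) (normrN1 _).
  move=> h1 h2; lra.
- rewrite /=; change (Rintegral (@lebR R) (@I01 R) (fun t => f (pC t)) <=
    Rintegral (@lebR R) (@I01 R) (fun t => g (pC t)) +
    Rintegral (@lebR R) (@I01 R) (fun t => h (pC t)) + c).
  apply: (Rint_sub c0 (pC_cont _ _ cf) _ (pC_cont _ _ cg) _ (pC_cont _ _ ch)).
  + by move=> t; apply: fM; exact: pC_abs.
  + by move=> t; apply: gM; exact: pC_abs.
  + by move=> t; apply: hM; exact: pC_abs.
  + by move=> t; apply: fgh; exact: pC_abs.
- have E1 := KH_eq _ _ _ fM cf; have E2 := KH_eq _ _ _ gM cg.
  have E3 := KH_eq _ _ _ hM ch.
  apply: (@le_trans _ _ (Rintegral (@lebR R) (@I01 R) (H3 R f))); first by rewrite E1.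
  apply: (@le_trans _ _ (Rintegral (@lebR R) (@I01 R) (H3 R g) +
                         Rintegral (@lebR R) (@I01 R) (H3 R h) + c)); last first.
    by apply: lerD => //; apply: lerD; [rewrite E2 | rewrite E3].
  have S3 (r s t : R) : g3 R f r s t <= g3 R g r s t + g3 R h r s t + c.
    by apply: fgh; apply: Qp_abs; exact: clamp01.
  have S2 (r s : R) : G3 R f r s <= G3 R g r s + G3 R h r s + c.
    apply: (Rint_sub c0 (g3_ct _ _ cf r s) (g3_bd _ _ _ fM r s)
                        (g3_ct _ _ cg r s) (g3_bd _ _ _ gM r s)
                        (g3_ct _ _ ch r s) (g3_bd _ _ _ hM r s)).
    by move=> t; exact: S3.
  have S1 (r : R) : H3 R f r <= H3 R g r + H3 R h r + c.
    apply: (Rint_sub c0 (G3_cs _ _ _ fM cf r) (G3_bd _ _ _ fM cf r)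
                        (G3_cs _ _ _ gM cg r) (G3_bd _ _ _ gM cg r)
                        (G3_cs _ _ _ hM ch r) (G3_bd _ _ _ hM ch r)).
    by move=> s; exact: S2.
  apply: (Rint_sub c0 (H3_c _ _ _ fM cf) (H3_bd _ _ _ fM cf)
                      (H3_c _ _ _ gM cg) (H3_bd _ _ _ gM cg)
                      (H3_c _ _ _ hM ch) (H3_bd _ _ _ hM ch)).
  by move=> r; exact: S1.
Qed.

Set Implicit Arguments.

Lemma cont_mul (R : realType) (E : zmodType) (d : E -> E -> R) :
  (forall x y e, 0 < e -> exists2 del, 0 < del &
     forall x' y', d x' x < del -> d y' y < del -> d (x' + y') (x + y) < e) ->
  (forall x, d x x = 0) ->
  forall x m e, 0 < e -> exists2 del, 0 < del &
    forall y, d y x < del -> d (y *+ m) (x *+ m) < e.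
Proof.
move=> cadd d0 x m; elim: m => [|m IH] e e0.
  by exists 1 => // y _; rewrite !mulr0n d0.
have [del1 del10 H1] := cadd x (x *+ m) e e0.
have [del2 del20 H2] := IH del1 del10.
exists (Num.min del1 del2); first by rewrite lt_min del10.
move=> y; rewrite lt_min => /andP[y1 y2].
by rewrite !mulrS; apply: H1 => //; apply: H2.
Qed.
Lemma main_gen (R : realType) (k : Kkind) (E : zmodType)
  (sc : Kcar R k -> E -> E) (d : E -> E -> R) (C0 C1 C2 C3 : R) :
  metric_vector_space sc d ->
  translation_invariant d C0 ->
  lipschitz_multiplicative sc d C1 C2 C3 ->
  (forall X Y, 0 <= d0 sc d X Y <= C1 * d X Y + C2 + C3) ->
  (forall X Y X1 Y1 X2 Y2 c, 0 <= c ->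
     (forall u, d (sc u X) (sc u Y) <=
                d (sc u X1) (sc u Y1) + d (sc u X2) (sc u Y2) + c) ->
     d0 sc d X Y <= d0 sc d X1 Y1 + d0 sc d X2 Y2 + c) ->
  forall A : set E, mopen (delta0 sc d) A -> mopen d A.
Proof.
move=> [[dge0 dsep dsym dtri] [scD scDr scM sc1] [cadd cscal]] tinv
  [C1ge1 C2ge0 C3ge0 lip] P1 P2 A oA.
have dxx x : d x x = 0 by apply/dsep.
have C0ge0 : 0 <= C0.
  by have := tinv 0 0 0; rewrite addr0 dxx; lra.
have dadd P P' Q Q' : d (P + P') (Q + Q') <= d P Q + d P' Q' + 2 * C0.
  have h1 := dtri (P + P') (Q + P') (Q + Q').
  have h2 := tinv P Q P'.
  have h3 := tinv P' Q' Q.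
  rewrite [P' + Q]addrC [Q' + Q]addrC in h3.
  lra.
have bound x y m : (0 < m)%N ->
    delta0 sc d x y <= (C1 * d (x *+ m) (y *+ m) + (C2 + C3 + 2 * C0)) / m%:R.
  move=> m0.
  pose a n := d0 sc d (x *+ n) (y *+ n).
  have a0 n : 0 <= a n by have /andP[] := P1 (x *+ n) (y *+ n).
  have asub n n' : a (n + n')%N <= a n + a n' + 2 * C0.
    apply: P2; first by rewrite mulr_ge0.
    by move=> u; rewrite !mulrnDr !scDr; apply: dadd.
  have [L [cvgL LB]] := fekete (mulr_ge0 (ler0n _ 2) C0ge0) a0 asub.
  have -> : delta0 sc d x y = L by apply: cvg_lim.
  apply: le_trans (LB m m0) _.
  rewrite ler_pM2r ?invr_gt0 ?ltr0n //.
  have /andP[_ h] := P1 (x *+ m) (y *+ m).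
  rewrite /a; lra.
move=> x Ax; have [e e0 He] := oA x Ax.
set K := C2 + C3 + 2 * C0.
have K0 : 0 <= K by rewrite /K; lra.
pose m := (Num.trunc (2 * K / e)).+1.
have m0 : (0 < m)%N by [].
have mR0 : 0 < m%:R :> R by rewrite ltr0n.
have hm : 2 * K / e < m%:R by apply: truncnS_gt.
have hK : K / m%:R < e / 2.
  rewrite ltr_pdivrMr // mulrAC ltr_pdivlMr //.
  by move: hm; rewrite ltr_pdivrMr //; lra.
have C10 : 0 < C1 by lra.
have e'0 : 0 < e / (2 * C1) by rewrite divr_gt0 // mulr_gt0.
have [del del0 Hdel] := cont_mul cadd dxx x m e'0.
exists del => // y dxy; apply: He.
have hy : d (y *+ m) (x *+ m) < e / (2 * C1).
  by apply: Hdel; rewrite dsym.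
apply: le_lt_trans (bound x y m m0) _.
rewrite mulrDl.
have h1 : C1 * d (x *+ m) (y *+ m) < e / 2.
  have eq : C1 * (e / (2 * C1)) = e / 2.
    by field; rewrite gt_eqF.
  by rewrite dsym -eq ltr_pM2l.
have h2 : C1 * d (x *+ m) (y *+ m) / m%:R <= C1 * d (x *+ m) (y *+ m).
  rewrite ler_pdivrMr // ler_peMr //; first by rewrite mulr_ge0 // ltW.
  by rewrite ler1n.
move: hK; rewrite /K => hK; lra.
Qed.

Unset Implicit Arguments.

Theorem lemma5 (R : realType) (k : Kkind) (E : zmodType)
  (sc : Kcar R k -> E -> E) (d : E -> E -> R) (C0 C1 C2 C3 : R) :
  metric_vector_space sc d ->
  translation_invariant d C0 ->
  lipschitz_multiplicative sc d C1 C2 C3 ->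
  forall A : set E,
    (mclosed (delta0 sc d) A -> mclosed d A) /\
    (mopen (delta0 sc d) A -> mopen d A).
Proof.
move=> mvs tinv lip A.
have [[dge0 dsep dsym dtri] _ [_ cscal]] := mvs.
have [C1ge1 C2ge0 C3ge0 lipf] := lip.
have dxx x : d x x = 0 by apply/dsep.
pose F X Y := fun u => d (sc u X) (sc u Y).
have Fcont X Y : Kcont (F X Y).
  move=> u0 e e0.
  have e20 : 0 < e / 2 by rewrite divr_gt0.
  have [d1 d10 H1] := cscal u0 X (e / 2) e20.
  have [d2 d20 H2] := cscal u0 Y (e / 2) e20.
  exists (Num.min d1 d2); first by rewrite lt_min d10.
  move=> u; rewrite lt_min => /andP[u1 u2].
  have dX : d X X < d1 by rewrite dxx.
  have dY : d Y Y < d2 by rewrite dxx.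
  have a := H1 u X u1 dX.
  have b := H2 u Y u2 dY.
  have t1 := dtri (sc u X) (sc u0 X) (sc u Y).
  have t2 := dtri (sc u0 X) (sc u0 Y) (sc u Y).
  have t3 := dtri (sc u0 X) (sc u X) (sc u0 Y).
  have t4 := dtri (sc u X) (sc u Y) (sc u0 Y).
  rewrite (dsym (sc u0 Y) (sc u Y)) in t2.
  rewrite (dsym (sc u0 X) (sc u X)) in t3.
  rewrite /F ltr_norml; apply/andP; split; lra.
have Fbd X Y : forall u, Kabs u = 1 -> 0 <= F X Y u <= C1 * d X Y + C2 + C3.
  move=> u Ku; have [_ hi] := lipf u X Y.
  by rewrite /F dge0 /=; move: hi; rewrite Ku !mulr1.
have P1 X Y : 0 <= d0 sc d X Y <= C1 * d X Y + C2 + C3.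
  exact: (Khaar_bd _ _ _ _ (Fcont X Y) (Fbd X Y)).
have P2 X Y X1 Y1 X2 Y2 c : 0 <= c ->
     (forall u, d (sc u X) (sc u Y) <=
                d (sc u X1) (sc u Y1) + d (sc u X2) (sc u Y2) + c) ->
     d0 sc d X Y <= d0 sc d X1 Y1 + d0 sc d X2 Y2 + c.
  move=> c0 H.
  exact: (Khaar_sub _ _ _ _ _ _ _ _ _ c0 (Fcont X Y) (Fbd X Y)
            (Fcont X1 Y1) (Fbd X1 Y1) (Fcont X2 Y2) (Fbd X2 Y2) (fun u _ => H u)).
have op := main_gen mvs tinv lip P1 P2.
by split; [move=> cA; exact: op | exact: op].
Qed.
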